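(* A geodesic metric space is $(L,C)$-quasi-isometric to $\mathbb{R}$ for some $L\geqslant 1$, $C\geqslant 0$ if and only if it is $(1,C')$-quasi-isometric to $\mathbb{R}$ for some $C'\geqslant 0$.
   Context: A map $f:(X,d_X)\to(Y,d_Y)$ is an $(L,C)$-quasi-isometry if $\frac1L d_X(a,b)-C\leqslant d_Y(f(a),f(b))\leqslant Ld_X(a,b)+C$ for all $a,b\in X$ and every point of $Y$ is within distance $C$ of $f(X)$. $\mathbb{R}$ carries its standard metric. *)

(* Defs.v *)
From Stdlib Require Import Reals.
Open Scope R_scope.

Definition is_metric {X : Type} (d : X -> X -> R) : Prop :=
  (forall a b, 0 <= d a b) /\
  (forall a b, d a b = 0 <-> a = b) /\
  (forall a b, d a b = d b a) /\
  (forall a b c, d a c <= d a b + d b c).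

Definition is_geodesic {X : Type} (d : X -> X -> R) : Prop :=
  forall a b : X, exists gamma : R -> X,
    gamma 0 = a /\ gamma (d a b) = b /\
    (forall s t, 0 <= s <= d a b -> 0 <= t <= d a b ->
       d (gamma s) (gamma t) = Rabs (s - t)).

Definition quasi_isometry {X Y : Type} (dX : X -> X -> R) (dY : Y -> Y -> R)
  (L C : R) (f : X -> Y) : Prop :=
  (forall a b : X, dX a b / L - C <= dY (f a) (f b) /\
                   dY (f a) (f b) <= L * dX a b + C) /\
  (forall y : Y, exists x : X, dY y (f x) <= C).

Definition dR (x y : R) : R := Rabs (x - y).

(* Main.v *)
Require Import Defs.
From Stdlib Require Import Reals Lra.
Open Scope R_scope.

Ltac rabs := unfold Rabs in *; repeat destruct Rcase_abs; lra.

Lemma coarse_ivt (h : R -> R) (D M v : R) : 0 <= D ->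
  (forall s t, 0<=s<=D -> 0<=t<=D -> Rabs (s-t) <= 1 -> Rabs (h s - h t) <= M) ->
  h 0 <= v -> v <= h D -> exists t, 0<=t<=D /\ Rabs (h t - v) <= M.
Proof.
  intros HD Hc H0 H1.
  assert (HM : 0 <= M).
  { specialize (Hc 0 0). replace (h 0 - h 0) with 0 in Hc by ring.
    replace (0 - 0) with 0 in Hc by ring. rewrite Rabs_R0 in Hc.
    apply Hc; lra. }
  assert (P : forall n : nat, (exists t, 0<=t<=D /\ Rabs (h t - v) <= M)
                \/ h (Rmin (INR n) D) <= v).
  { induction n as [|n IH].
    - right. simpl. rewrite Rmin_left by lra. exact H0.
    - destruct IH as [IH|IH]; [left; exact IH|].
      destruct (Rle_dec (h (Rmin (INR (S n)) D)) v) as [Hle|Hlt]; [right; exact Hle|].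
      left. exists (Rmin (INR n) D).
      assert (Hn : 0 <= INR n) by apply pos_INR.
      rewrite S_INR in Hlt.
      assert (Hm1 : 0 <= Rmin (INR n) D <= D).
      { unfold Rmin; destruct Rle_dec; lra. }
      assert (Hm2 : 0 <= Rmin (INR n + 1) D <= D).
      { unfold Rmin; destruct Rle_dec; lra. }
      assert (Hm3 : Rabs (Rmin (INR n + 1) D - Rmin (INR n) D) <= 1).
      { unfold Rmin; repeat destruct Rle_dec; rabs. }
      specialize (Hc _ _ Hm2 Hm1 Hm3).
      split; [exact Hm1|]. rabs. }
  destruct (INR_archimed 1 D) as [n Hn]; [lra|].
  destruct (P n) as [Hx|Hx]; [exact Hx|].
  rewrite Rmin_right in Hx by lra.
  exists D. split; [lra|]. replace (h D - v) with 0 by lra. rewrite Rabs_R0; exact HM.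
Qed.

Lemma close_pts (X : Type) (d : X -> X -> R) (g : X -> R) (L C : R) (HL : 1 <= L)
  (Hq : forall a b : X, d a b / L - C <= dR (g a) (g b) /\ dR (g a) (g b) <= L * d a b + C)
  (a b : X) (r : R) : dR (g a) (g b) <= r -> d a b <= L * (r + C).
Proof.
  intros H. destruct (Hq a b) as [H1 _].
  assert (e : d a b / L <= r + C) by lra.
  replace (d a b) with (d a b / L * L) by (field; lra).
  rewrite (Rmult_comm L). apply Rmult_le_compat_r; lra.
Qed.

Lemma align (X : Type) (d : X -> X -> R) (g : X -> R) (L C : R)
  (Hm : is_metric d) (Hg : is_geodesic d) (HL : 1 <= L) (HC : 0 <= C)
  (Hq : forall a b : X, d a b / L - C <= dR (g a) (g b) /\ dR (g a) (g b) <= L * d a b + C)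
  (a b x : X) : (g a <= g x <= g b \/ g b <= g x <= g a) ->
  d a x + d x b <= d a b + 2 * (L * ((L + C) + C)).
Proof.
  intros Hbt.
  destruct Hm as [Hpos [Hzero [Hsym Htri]]].
  destruct (Hg a b) as [gm [G0 [GD Giso]]].
  set (D := d a b) in *.
  assert (HD : 0 <= D) by apply Hpos.
  assert (Hc : forall s t, 0<=s<=D -> 0<=t<=D -> Rabs (s-t) <= 1 ->
     Rabs (g (gm s) - g (gm t)) <= L + C).
  { intros s t Hs Ht Hst. destruct (Hq (gm s) (gm t)) as [_ H2].
    unfold dR in H2. rewrite Giso in H2 by assumption.
    assert (L * Rabs (s - t) <= L * 1) by (apply Rmult_le_compat_l; lra). lra. }
  assert (Ht : exists t, 0<=t<=D /\ Rabs (g (gm t) - g x) <= L + C).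
  { destruct Hbt as [Hb|Hb].
    - apply (coarse_ivt (fun t => g (gm t))); auto; rewrite ?G0, ?GD; lra.
    - destruct (coarse_ivt (fun t => - g (gm t)) D (L+C) (- g x)) as [t [Ht1 Ht2]]; auto.
      + intros s t Hs Ht Hst. specialize (Hc s t Hs Ht Hst). rabs.
      + rewrite G0; lra.
      + rewrite GD; lra.
      + exists t; split; auto. rabs. }
  destruct Ht as [t [Ht1 Ht2]].
  assert (Hx : d (gm t) x <= L * ((L + C) + C)).
  { apply (close_pts X d g L C HL Hq). unfold dR; exact Ht2. }
  assert (E1 : d a (gm t) = t).
  { rewrite <- G0. rewrite Giso by lra. rabs. }
  assert (E2 : d (gm t) b = D - t).
  { rewrite <- GD at 1. rewrite Giso by lra. rabs. }
  pose proof (Htri a (gm t) x). pose proof (Htri x (gm t) b).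
  rewrite (Hsym x (gm t)) in *. lra.
Qed.

Theorem corollary4p12 (X : Type) (d : X -> X -> R)
  (Hmetric : is_metric d) (Hgeod : is_geodesic d) :
  (exists (L C : R) (f : X -> R), 1 <= L /\ 0 <= C /\ quasi_isometry d dR L C f)
  <->
  (exists (C' : R) (f : X -> R), 0 <= C' /\ quasi_isometry d dR 1 C' f).
Proof.
  split.
  2:{ intros [C' [f [H1 H2]]]. exists 1, C', f. split; [lra|auto]. }
  intros [L [C [g [HL [HC [Hq Hs]]]]]].
  destruct (Hs 0) as [o _].
  set (K := L * ((L + C) + C)).
  assert (HK : 0 <= K).
  { unfold K. apply Rmult_le_pos; lra. }
  pose proof (align X d g L C Hmetric Hgeod HL HC Hq) as Al. fold K in Al.
  pose proof Hmetric as [Hpos [Hzero [Hsym Htri]]].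
  set (f := fun x => if Rle_dec (g o) (g x) then d o x else - d o x).
  exists (2 * K), f. split; [lra|]. split.
  - intros a b. replace (d a b / 1) with (d a b) by field.
    unfold dR, f.
    pose proof (Htri o a b). pose proof (Htri o b a). pose proof (Htri a o b).
    pose proof (Hsym a b). pose proof (Hsym o a). pose proof (Hpos o a). pose proof (Hpos o b).
    destruct (Rle_dec (g o) (g a)); destruct (Rle_dec (g o) (g b)).
    + destruct (Rle_dec (g a) (g b)).
      * pose proof (Al o b a ltac:(lra)). split; rabs.
      * pose proof (Al o a b ltac:(lra)). split; rabs.
    + pose proof (Al a b o ltac:(lra)). split; rabs.
    + pose proof (Al a b o ltac:(lra)). split; rabs.
    + destruct (Rle_dec (g a) (g b)).
      * pose proof (Al o a b ltac:(lra)). split; rabs.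
      * pose proof (Al o b a ltac:(lra)). split; rabs.
  - intros r. unfold dR.
    assert (Hoo : f o = 0).
    { unfold f. destruct Rle_dec; [|lra]. apply Hzero; reflexivity. }
    destruct (Rle_dec 0 r) as [Hr|Hr].
    + destruct (Hs (g o + L * r + 2 * C)) as [y Hy]. unfold dR in Hy.
      assert (Lr : 0 <= L * r) by (apply Rmult_le_pos; lra).
      assert (Hgy : g o + L * r + C <= g y) by rabs.
      assert (Hdy : L * r <= L * d o y).
      { destruct (Hq o y) as [_ H2]. unfold dR in H2. rabs. }
      assert (Hdy' : r <= d o y).
      { apply Rmult_le_reg_l with L; lra. }
      destruct (Hgeod o y) as [gm [G0 [GD Giso]]].
      assert (E1 : d o (gm r) = r).
      { rewrite <- G0 at 1. rewrite Giso by lra. rabs. }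
      assert (E2 : d (gm r) y = d o y - r).
      { rewrite <- GD at 1. rewrite Giso by lra. rabs. }
      destruct (Rle_dec (g o) (g (gm r))).
      * exists (gm r). unfold f. destruct Rle_dec; [|lra]. rabs.
      * exists o. rewrite Hoo.
        pose proof (Al (gm r) y o ltac:(lra)). rewrite (Hsym (gm r) o) in *. rabs.
    + destruct (Hs (g o + L * r - 2 * C)) as [y Hy]. unfold dR in Hy.
      assert (Lr : L * r <= 0).
      { assert (0 <= L * (-r)) by (apply Rmult_le_pos; lra). lra. }
      assert (Hgy : g y <= g o + L * r - C) by rabs.
      assert (Hdy : L * (- r) <= L * d o y).
      { destruct (Hq o y) as [_ H2]. unfold dR in H2. rabs. }
      assert (Hdy' : - r <= d o y).
      { apply Rmult_le_reg_l with L; lra. }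
      destruct (Hgeod o y) as [gm [G0 [GD Giso]]].
      assert (E1 : d o (gm (-r)) = - r).
      { rewrite <- G0 at 1. rewrite Giso by lra. rabs. }
      assert (E2 : d (gm (-r)) y = d o y + r).
      { rewrite <- GD at 1. rewrite Giso by lra. rabs. }
      destruct (Rle_dec (g o) (g (gm (-r)))).
      * exists o. rewrite Hoo.
        pose proof (Al (gm (-r)) y o ltac:(lra)). rewrite (Hsym (gm (-r)) o) in *. rabs.
      * exists (gm (-r)). unfold f. destruct Rle_dec; [lra|]. rabs.
Qed.
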